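(* Let $\boldsymbol{\rho}$ be a $d\times d$ correlation matrix with coarsest partition $G^{\star}$, and let $\widehat{\boldsymbol{\rho}}$ be any real symmetric $d\times d$ matrix. Set $$\tau:=\max_{i,j,l\in[d]}\big|(\widehat\rho_{il}-\widehat\rho_{jl})-(\rho_{il}-\rho_{jl})\big|,\qquad \Delta:=\min_{i\not\sim j}\mathrm{CORD}(i,j)$$ (with $\Delta=+\infty$ if $G^\star$ has a single block). If $\tau\le\varepsilon<\Delta-\tau$, then the PARTITION procedure with inputs $\mathbf{D}=\widehat{\mathrm{CORD}}$ and $\varepsilon$ (with arbitrary tie-breaking in the argmin) outputs $\widehat G=G^{\star}$.
   Context: $[d]=\{1,\dots,d\}$. The coarsest partition $G^\star$ of $[d]$ consists of the equivalence classes of $i\sim j\iff \max_{l\neq i,j}|\rho_{il}-\rho_{jl}|=0$; $i\not\sim j$ means $i,j$ lie in different blocks. $\mathrm{CORD}(i,j):=\max_{l\neq i,j}|\rho_{il}-\rho_{jl}|$ and $\widehat{\mathrm{CORD}}(i,j):=\max_{l\neq i,j}|\widehat\rho_{il}-\widehat\rho_{jl}|$ for $i,j\in[d]$ (in particular both equal $0$ when $i=j$). PARTITION$(\mathbf{D},\varepsilon)$, for a $d\times d$ dissimilarity matrix $\mathbf{D}$ and $\varepsilon>0$: initialize $S=[d]$; while $S\neq\emptyset$: if $|S|=1$, output $S$ as a new block; if $|S|>1$, pick $(i,j)\in\operatorname{argmin}_{i,j\in S,\,i\neq j}\mathbf{D}(i,j)$; if $\mathbf{D}(i,j)>\varepsilon$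 the new block is $\{i\}$, otherwise the new block is $\{k\in S:\min(\mathbf{D}(i,k),\mathbf{D}(j,k))\le\varepsilon\}$; remove the new block from $S$ and repeat. The output $\widehat G$ is the collection of blocks produced. *)

(* Defs.v *)
From HB Require Import structures.
From mathcomp Require Import all_boot all_order all_algebra.
From mathcomp Require Import all_reals.
Set Implicit Arguments. Unset Strict Implicit. Unset Printing Implicit Defensive.
Import Order.TTheory GRing.Theory Num.Theory.
Local Open Scope ring_scope.

Section Defs.
Variables (R : realType) (d : nat).

Definition is_corr_matrix (rho : 'M[R]_d) : Prop :=
  [/\ rho^T = rho, (forall i, rho i i = 1) &
      (forall v : 'cV[R]_d, 0 <= (v^T *m rho *m v) 0 0)].

(* CORD(i,j) = max_{l <> i,j} |rho_il - rho_jl|  (empty max = 0; = 0 when i = j) *)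
Definition cord (rho : 'M[R]_d) (i j : 'I_d) : R :=
  \big[Num.max/0]_(l | (l != i) && (l != j)) `|rho i l - rho j l|.

Definition cord_mx (rho : 'M[R]_d) : 'M[R]_d := \matrix_(i, j) cord rho i j.

Definition cord_equiv (rho : 'M[R]_d) (i j : 'I_d) : bool := cord rho i j == 0.

Definition coarsest_partition (rho : 'M[R]_d) : {set {set 'I_d}} :=
  [set [set j | cord_equiv rho i j] | i : 'I_d].

Definition tau_err (rho rhohat : 'M[R]_d) : R :=
  \big[Num.max/0]_(i : 'I_d) \big[Num.max/0]_(j : 'I_d) \big[Num.max/0]_(l : 'I_d)
     `|(rhohat i l - rhohat j l) - (rho i l - rho j l)|.

Definition new_block (D : 'M[R]_d) (eps : R) (S : {set 'I_d}) (i j : 'I_d)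
  : {set 'I_d} :=
  if eps < D i j then [set i]
  else [set k in S | Num.min (D i k) (D j k) <= eps].

(* PARTITION(D, eps) as a relation: partition_run D eps S G means that, starting
   from the remaining set S, some execution (some tie-breaking of the argmin)
   outputs the collection of blocks G. *)
Inductive partition_run (D : 'M[R]_d) (eps : R)
  : {set 'I_d} -> {set {set 'I_d}} -> Prop :=
| pr_empty : partition_run D eps set0 set0
| pr_single (S : {set 'I_d}) : #|S| = 1%N -> partition_run D eps S [set S]
| pr_step (S : {set 'I_d}) (i j : 'I_d) (G : {set {set 'I_d}}) :
    (1 < #|S|)%N -> i \in S -> j \in S -> i != j ->
    (forall k l, k \in S -> l \in S -> k != l -> D i j <= D k l) ->
    partition_run D eps (S :\: new_block D eps S i j) G ->
    partition_run D eps S (new_block D eps S i j |: G).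

End Defs.

(* Main.v *)
Require Import Defs.
From HB Require Import structures.
From mathcomp Require Import all_boot all_order all_algebra.
From mathcomp Require Import all_reals.
Import Order.TTheory GRing.Theory Num.Theory.
Set Implicit Arguments. Unset Strict Implicit.
Local Open Scope ring_scope.



Lemma cord_ge0 (R : realType) d (r : 'M[R]_d) i j : 0 <= cord r i j.
Proof. rewrite /cord; elim/big_ind: _ => //= x y Hx Hy; by rewrite le_max Hx. Qed.

Lemma cord_ii (R : realType) d (r : 'M[R]_d) i : cord r i i = 0.
Proof. apply/le_anti; rewrite cord_ge0 andbT; apply: bigmax_le => // l _; by rewrite subrr normr0. Qed.

Lemma cord_sym (R : realType) d (r : 'M[R]_d) i j : cord r i j = cord r j i.
Proof.
rewrite /cord (eq_bigl (fun l => (l != j) && (l != i))); last by move=> l; rewrite andbC.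
by apply: eq_bigr => l _; rewrite distrC.
Qed.

Lemma cord_le (R : realType) d (r : 'M[R]_d) i j c :
  0 <= c -> (forall l, l != i -> l != j -> `|r i l - r j l| <= c) -> cord r i j <= c.
Proof. by move=> c0 H; apply: bigmax_le => // l /andP[]; apply: H. Qed.

Lemma cord_term (R : realType) d (r : 'M[R]_d) i j l :
  l != i -> l != j -> `|r i l - r j l| <= cord r i j.
Proof. by move=> h1 h2; rewrite /cord; apply: le_bigmax_cond; rewrite h1 h2. Qed.

Lemma tau_ge0 (R : realType) d (r rh : 'M[R]_d) : 0 <= tau_err r rh.
Proof. by rewrite /tau_err bigmax_idl le_max lexx. Qed.

Lemma tau_term (R : realType) d (r rh : 'M[R]_d) i j l :
  `|(rh i l - rh j l) - (r i l - r j l)| <= tau_err r rh.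
Proof.
rewrite /tau_err; apply: le_trans (le_bigmax _ _ i).
apply: le_trans (le_bigmax _ _ j); exact: le_bigmax.
Qed.

Lemma cord_close1 (R : realType) d (r rh : 'M[R]_d) i j :
  cord rh i j <= cord r i j + tau_err r rh.
Proof.
apply: cord_le; first by rewrite addr_ge0 ?cord_ge0 ?tau_ge0.
move=> l h1 h2; set a := rh i l - rh j l; set b := r i l - r j l.
have -> : a = b + (a - b) by rewrite addrC subrK.
apply: le_trans (ler_normD _ _) _; apply: lerD; first exact: cord_term.
exact: tau_term.
Qed.

Lemma cord_close2 (R : realType) d (r rh : 'M[R]_d) i j :
  cord r i j <= cord rh i j + tau_err r rh.
Proof.
apply: cord_le; first by rewrite addr_ge0 ?cord_ge0 ?tau_ge0.
move=> l h1 h2; set a := rh i l - rh j l; set b := r i l - r j l.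
have -> : b = a - (a - b) by rewrite opprB addrC subrK.
apply: le_trans (ler_normB _ _) _; apply: lerD; first exact: cord_term.
exact: tau_term.
Qed.

Lemma cord0P (R : realType) d (r : 'M[R]_d) i j :
  cord r i j = 0 <-> (forall l, l != i -> l != j -> r i l = r j l).
Proof.
split.
- move=> H l h1 h2; apply/eqP; rewrite -subr_eq0 -normr_eq0 eq_le normr_ge0 andbT.
  by rewrite -H cord_term.
- move=> H; apply/le_anti; rewrite cord_ge0 andbT; apply: cord_le => // l h1 h2.
  by rewrite H // subrr normr0.
Qed.

Lemma cequiv_refl (R : realType) d (r : 'M[R]_d) i : cord_equiv r i i.
Proof. by rewrite /cord_equiv cord_ii. Qed.

Lemma cequiv_sym (R : realType) d (r : 'M[R]_d) i j : cord_equiv r i j = cord_equiv r j i.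
Proof. by rewrite /cord_equiv cord_sym. Qed.

Lemma cequiv_trans (R : realType) d (r : 'M[R]_d) i j k :
  (forall a b, r a b = r b a) ->
  cord_equiv r i j -> cord_equiv r j k -> cord_equiv r i k.
Proof.
move=> Hs /eqP/cord0P Hij /eqP/cord0P Hjk; apply/eqP/cord0P => l hi hk.
case: (eqVneq l j) => [elj|hj]; last by rewrite Hij // Hjk.
subst l.
case: (eqVneq i k) => [->//|nik].
rewrite (Hs i j) (Hjk i); try by [|rewrite eq_sym].
rewrite (Hs k i) (Hij k); try by [|rewrite eq_sym].
Qed.

Lemma key (R : realType) d (rho rh : 'M[R]_d) eps i j :
  tau_err rho rh <= eps ->
  (forall i j : 'I_d, ~~ cord_equiv rho i j -> eps < cord rho i j - tau_err rho rh) ->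
  (cord rh i j <= eps) = cord_equiv rho i j.
Proof.
move=> Ht Hd; case E: (cord_equiv rho i j).
- have E0 : cord rho i j = 0 by apply/eqP.
  by apply: le_trans (cord_close1 rho rh i j) _; rewrite E0 add0r.
- apply/negbTE; rewrite -ltNge; apply: lt_le_trans (Hd i j _) _; first by rewrite E.
  by rewrite lerBlDr cord_close2.
Qed.

Definition cls (R : realType) d (rho : 'M[R]_d) x := [set y | cord_equiv rho x y].

Lemma run_uniq (R : realType) d (rho rh : 'M[R]_d) eps :
  (forall a b, rho a b = rho b a) ->
  (forall i j, (cord rh i j <= eps) = cord_equiv rho i j) ->
  forall S G, partition_run (cord_mx rh) eps S G ->
  (forall x y, x \in S -> cord_equiv rho x y -> y \in S) ->
  G = [set cls rho x | x in S].
Proof.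
move=> Hs Hk S G; elim => {S G}.
- by move=> _; rewrite imset0.
- move=> S /eqP/cards1P[x ->] Hc; rewrite imset_set1; congr [set _].
  apply/setP => y; rewrite !inE; apply/idP/idP => [/eqP->|H].
  + exact: cequiv_refl.
  + by have := Hc x y; rewrite inE eqxx => /(_ isT H); rewrite inE.
- move=> S i j G S1 iS jS nij Hmin _ IH Hc.
  have Dm : forall a b, cord_mx rh a b = cord rh a b by move=> a b; rewrite mxE.
  have clsE : forall x y, cord_equiv rho x y -> cls rho x = cls rho y.
    move=> x y xy; apply/setP => z; rewrite !inE; apply/idP/idP => H.
    + by apply: cequiv_trans Hs _ H; rewrite cequiv_sym.
    + exact: cequiv_trans Hs xy H.
  have HB : new_block (cord_mx rh) eps S i j = cls rho i.
    rewrite /new_block; case: ifPn => Hlt.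
    + apply/setP => y; rewrite !inE; apply/idP/idP => [/eqP->|H]; first exact: cequiv_refl.
      apply/negPn/negP => ny.
      have := Hmin i y iS (Hc _ _ iS H); rewrite eq_sym => /(_ ny).
      rewrite !Dm => h; have hy : cord rh i y <= eps by rewrite Hk.
      by move: Hlt; rewrite Dm => Hlt; have := lt_le_trans Hlt (le_trans h hy); rewrite ltxx.
    + move: Hlt; rewrite -leNgt Dm Hk => eij.
      apply/setP => y; rewrite !inE ge_min !Dm !Hk; apply/idP/idP.
      * case/andP=> _ /orP[//|]; exact: cequiv_trans.
      * by move=> H; rewrite (Hc _ _ iS H) H.
  rewrite HB in IH *; rewrite IH; last first.
    move=> x y; rewrite !inE => /andP[nx xS] xy; rewrite (Hc _ _ xS xy) andbT.
    apply: contra nx => iy; apply: cequiv_trans Hs iy _; by rewrite cequiv_sym.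
  apply/setP => C; rewrite in_setU1; apply/idP/idP.
  + case/orP => [/eqP->|/imsetP[x]]; first by apply/imsetP; exists i.
    by rewrite inE => /andP[_ xS] ->; apply/imsetP; exists x.
  + case/imsetP => x xS ->; case E: (x \in cls rho i).
    * by rewrite inE in E; rewrite (clsE _ _ E) eqxx.
    * by apply/orP; right; apply/imsetP; exists x => //; rewrite inE E.
Qed.

Lemma run_ex (R : realType) d (D : 'M[R]_d) eps :
  0 < eps -> (forall i, D i i = 0) ->
  forall n (S : {set 'I_d}), (#|S| <= n)%N -> exists G, partition_run D eps S G.
Proof.
move=> e0 Dii; elim=> [|n IH] S hS.
  move: hS; rewrite leqn0 => /eqP/cards0_eq ->; exists set0; exact: pr_empty.
case: (ltngtP #|S| 1) => [h|h|h].
- move: h; rewrite ltnS leqn0 => /eqP/cards0_eq ->; exists set0; exact: pr_empty.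
- move/card_gt1P: (h) => [x [y [xS yS xy]]].
  pose P := [pred p : 'I_d * 'I_d | [&& p.1 \in S, p.2 \in S & p.1 != p.2]].
  have Pp0 : P (x, y) by rewrite /= xS yS xy.
  case: (arg_minP (fun p : 'I_d * 'I_d => D p.1 p.2) Pp0) => [[i j]] /= /and3P[iS jS nij] Hm.
  have Hmin : forall k l, k \in S -> l \in S -> k != l -> D i j <= D k l.
    by move=> k l kS lS kl; apply: (Hm (k, l)); rewrite /= kS lS kl.
  have iB : i \in new_block D eps S i j.
    rewrite /new_block; case: ifP => _; first by rewrite inE.
    by rewrite inE iS ge_min Dii ltW.
  have BS : new_block D eps S i j \subset S.
    rewrite /new_block; case: ifP => _; first by rewrite sub1set.
    by apply/subsetP => k; rewrite inE => /andP[].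
  have [G HG] : exists G, partition_run D eps (S :\: new_block D eps S i j) G.
    apply: IH; rewrite -ltnS; apply: leq_trans hS.
    apply: (@leq_trans #|S :\ i|.+1).
      rewrite ltnS; apply: subset_leq_card; apply/subsetP => k.
      rewrite !inE => /andP[kB kS]; rewrite kS andbT; apply: contra kB => /eqP->//.
    by rewrite (cardsD1 i S) iS.
  exists (new_block D eps S i j |: G); exact: pr_step h iS jS nij Hmin HG.
- exists [set S]; exact: pr_single.
Qed.

Unset Implicit Arguments.
Set Strict Implicit.

Theorem lemma1 (R : realType) (d : nat) (rho rhohat : 'M[R]_d) (eps : R) :
  is_corr_matrix rho ->
  rhohat^T = rhohat ->
  0 < eps ->
  tau_err rho rhohat <= eps ->
  (* eps < Delta - tau, with Delta = min over i !~ j of CORD(i,j) (= +oo if none) *)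
  (forall i j : 'I_d, ~~ cord_equiv rho i j ->
     eps < cord rho i j - tau_err rho rhohat) ->
  (exists G, partition_run (cord_mx rhohat) eps [set: 'I_d] G) /\
  (forall G, partition_run (cord_mx rhohat) eps [set: 'I_d] G ->
     G = coarsest_partition rho).
Proof.
move=> [HT _ _] _ e0 Ht Hd; split.
  apply: (run_ex e0 _ (leqnn _)) => i; rewrite mxE; exact: cord_ii.
move=> G HG.
have Hs : forall a b, rho a b = rho b a.
  by move=> a b; rewrite -{1}HT mxE.
rewrite (run_uniq Hs (fun i j => key i j Ht Hd) HG) //.
apply/setP => C; apply/imsetP/imsetP => [][x _ ->]; exists x => //.
by move=> x y _ _; rewrite inE.
Qed.
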